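(* Let $(\bar{A}_{\tau,\sigma},\bar{B}_\tau,B_\tau,C_\tau)$ be csRKN coefficients satisfying, for all $\tau,\sigma\in[0,1]$, $$C_\tau=1-C_{1-\tau},\ \ \bar{A}_{\tau,\sigma}=B_{1-\sigma}(1-C_{1-\tau})-\bar{B}_{1-\sigma}+\bar{A}_{1-\tau,1-\sigma},\ \ \bar{B}_\tau=B_{1-\tau}-\bar{B}_{1-\tau},\ \ B_\tau=B_{1-\tau}.$$ Let $(b_i,c_i)_{i=1}^s$ be a quadrature formula on $[0,1]$ (weights $b_i$, nodes $c_i$) with $b_{s+1-i}=b_i$ and $c_{s+1-i}=1-c_i$ for all $i$. Then the $s$-stage RKN method with coefficients $$\bar{a}_{ij}=b_j\bar{A}_{c_i,c_j},\quad \bar{b}_i=b_i\bar{B}_{c_i},\quad \hat b_i=b_iB_{c_i},\quad \hat c_i=C_{c_i}\qquad(i,j=1,\dots,s)$$ is symmetric.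
   Context: For $q''=f(t,q)$ with smooth $f:\mathbb{R}\times\mathbb{R}^d\to\mathbb{R}^d$, an $s$-stage RKN method with coefficients $(\bar a_{ij},\bar b_i,\hat b_i,\hat c_i)$ and step size $h$ is $$Q_i=q_0+h\hat c_iq'_0+h^2\sum_{j=1}^s\bar a_{ij}f(t_0+\hat c_jh,Q_j),\ i=1,\dots,s,$$ $$q_1=q_0+hq'_0+h^2\sum_{i=1}^s\bar b_if(t_0+\hat c_ih,Q_i),\qquad q'_1=q'_0+h\sum_{i=1}^s\hat b_if(t_0+\hat c_ih,Q_i).$$ A one-step method $\Phi_h$ is symmetric if $\Phi_h=\Phi_{-h}^{-1}$, i.e. exchanging $h\leftrightarrow-h$, $(q_0,q_0')\leftrightarrow(q_1,q_1')$, $t_0\leftrightarrow t_1=t_0+h$ leaves the method unaltered. *)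

(* Defs.v *)
From HB Require Import structures.
From mathcomp Require Import all_boot all_order all_algebra.
Set Implicit Arguments. Unset Strict Implicit. Unset Printing Implicit Defensive.
Import Order.TTheory GRing.Theory Num.Theory.
Local Open Scope ring_scope.

(* One step of the s-stage RKN method with coefficients (abar, bbar, bhat, chat)
   for q'' = f(t,q), q in R^d (row vectors), from (t0,q0,p0) with step h,
   producing (q1,p1); p denotes q'.  The (possibly implicit) method is viewed
   as a relation: the step holds iff there exist stage values Q_i satisfying
   the stage equations. *)
Definition rkn_step (R : nzRingType) (d s : nat)
  (abar : 'I_s -> 'I_s -> R) (bbar bhat chat : 'I_s -> R)
  (f : R -> 'rV[R]_d -> 'rV[R]_d) (t0 h : R) (q0 p0 q1 p1 : 'rV[R]_d) : Prop :=
  exists Q : 'I_s -> 'rV[R]_d,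
    (forall i : 'I_s,
        Q i = q0 + (h * chat i) *: p0
              + (h ^+ 2) *: \sum_(j < s) (abar i j *: f (t0 + chat j * h) (Q j)))
    /\ q1 = q0 + h *: p0 + (h ^+ 2) *: \sum_(i < s) (bbar i *: f (t0 + chat i * h) (Q i))
    /\ p1 = p0 + h *: \sum_(i < s) (bhat i *: f (t0 + chat i * h) (Q i)).

(* Symmetry: Phi_h = Phi_{-h}^{-1}, i.e. exchanging h <-> -h,
   (q0,p0) <-> (q1,p1), t0 <-> t1 = t0 + h leaves the method unaltered. *)
Definition rkn_symmetric (R : nzRingType) (d s : nat)
  (abar : 'I_s -> 'I_s -> R) (bbar bhat chat : 'I_s -> R) : Prop :=
  forall (f : R -> 'rV[R]_d -> 'rV[R]_d) (t0 h : R) (q0 p0 q1 p1 : 'rV[R]_d),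
    rkn_step abar bbar bhat chat f t0 h q0 p0 q1 p1 <->
    rkn_step abar bbar bhat chat f (t0 + h) (- h) q1 p1 q0 p0.

(* Main.v *)
Require Import Defs.
From HB Require Import structures.
From mathcomp Require Import all_boot all_order all_algebra ring.
Import Order.TTheory GRing.Theory Num.Theory.
Local Open Scope ring_scope.



Lemma step_rev (R : realFieldType) (d s : nat)
  (a : 'I_s -> 'I_s -> R) (bb bh ch : 'I_s -> R)
  (hch : forall i, ch (rev_ord i) = 1 - ch i)
  (hbh : forall i, bh (rev_ord i) = bh i)
  (hbb : forall i, bb (rev_ord i) = bh i - bb i)
  (ha : forall i k, a (rev_ord i) k = bb k - ch i * bh k + a i (rev_ord k))
  f t0 h (q0 p0 q1 p1 : 'rV[R]_d) :
  rkn_step a bb bh ch f t0 h q0 p0 q1 p1 ->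
  rkn_step a bb bh ch f (t0 + h) (- h) q1 p1 q0 p0.
Proof.
case=> Q [hQ [hq1 hp1]].
pose F := fun k => f (t0 + ch k * h) (Q k).
have hQ' : forall i, Q i = q0 + (h * ch i) *: p0 + (h ^+ 2) *: \sum_j (a i j *: F j) by exact: hQ.
have hq1' : q1 = q0 + h *: p0 + (h ^+ 2) *: \sum_i (bb i *: F i) by exact: hq1.
have hp1' : p1 = p0 + h *: \sum_i (bh i *: F i) by exact: hp1.
have hF : forall j, f (t0 + h + ch j * -h) (Q (rev_ord j)) = F (rev_ord j).
  by move=> j; rewrite /F hch; congr f; ring.
have rev_sum : forall g : 'I_s -> 'rV[R]_d, \sum_j g (rev_ord j) = \sum_j g j.
  by move=> g; rewrite [RHS](reindex_inj rev_ord_inj).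
pose X := \sum_i (bb i *: F i).
pose Y := \sum_i (bh i *: F i).
exists (fun i => Q (rev_ord i)); split; [|split].
- move=> i /=. under eq_bigr => j _ do rewrite hF.
  rewrite -(rev_sum (fun j => a i j *: F (rev_ord j))) /=.
  under eq_bigr => j _ do rewrite rev_ordK.
  rewrite hQ' hq1' hp1'.
  have -> : \sum_j a (rev_ord i) j *: F j = X - ch i *: Y + \sum_j a i (rev_ord j) *: F j.
    by rewrite /X /Y scaler_sumr -sumrB -big_split; apply: eq_bigr => k _; rewrite ha scalerDl scalerBl scalerA.
  rewrite -/X -/Y.
  set Z := \sum_(j < s) _.
  apply/rowP => m; rewrite !mxE hch; ring.
- under eq_bigr => j _ do rewrite hF.
  rewrite -(rev_sum (fun j => bb j *: F (rev_ord j))) /=.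
  under eq_bigr => j _ do rewrite rev_ordK hbb scalerBl.
  rewrite sumrB -/X -/Y hq1' hp1'.
  apply/rowP => m; rewrite !mxE; ring.
- under eq_bigr => j _ do rewrite hF.
  rewrite -(rev_sum (fun j => bh j *: F (rev_ord j))) /=.
  under eq_bigr => j _ do rewrite rev_ordK hbh.
  rewrite -/Y hp1'.
  apply/rowP => m; rewrite !mxE; ring.
Qed.

Theorem theorem4p1 (R : realFieldType) (d s : nat)
  (Abar : R -> R -> R) (Bbar B C : R -> R)
  (hC : forall tau, 0 <= tau <= 1 -> C tau = 1 - C (1 - tau))
  (hA : forall tau sigma, 0 <= tau <= 1 -> 0 <= sigma <= 1 ->
          Abar tau sigma = B (1 - sigma) * (1 - C (1 - tau)) - Bbar (1 - sigma)
                           + Abar (1 - tau) (1 - sigma))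
  (hBbar : forall tau, 0 <= tau <= 1 -> Bbar tau = B (1 - tau) - Bbar (1 - tau))
  (hB : forall tau, 0 <= tau <= 1 -> B tau = B (1 - tau))
  (b c : 'I_s -> R)
  (hc01 : forall i, 0 <= c i <= 1)
  (hbsym : forall i, b (rev_ord i) = b i)
  (hcsym : forall i, c (rev_ord i) = 1 - c i) :
  rkn_symmetric d
    (fun i j => b j * Abar (c i) (c j))
    (fun i => b i * Bbar (c i))
    (fun i => b i * B (c i))
    (fun i => C (c i)).
Proof.
have h1 : forall i, 0 <= 1 - c i <= 1 by move=> i; rewrite -hcsym.
have hch : forall i, C (c (rev_ord i)) = 1 - C (c i).
  by move=> i; rewrite hcsym (hC (c i)) //; ring.
have hbh : forall i, b (rev_ord i) * B (c (rev_ord i)) = b i * B (c i).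
  by move=> i; rewrite hbsym hcsym -hB.
have hbb : forall i, b (rev_ord i) * Bbar (c (rev_ord i)) = b i * B (c i) - b i * Bbar (c i).
  move=> i; rewrite hbsym hcsym (hBbar (1 - c i)) //.
  have -> : 1 - (1 - c i) = c i by ring.
  ring.
have ha : forall i k, b k * Abar (c (rev_ord i)) (c k) =
   b k * Bbar (c k) - C (c i) * (b k * B (c k)) + b (rev_ord k) * Abar (c i) (c (rev_ord k)).
  move=> i k; rewrite hbsym hcsym (hcsym k) (hA (c i) (1 - c k)) //.
  have -> : 1 - (1 - c k) = c k by ring.
  rewrite -(hC (c i)) //; ring.
move=> f t0 h q0 p0 q1 p1; split; first exact: step_rev.
move=> H; have := @step_rev R d s _ _ _ _ hch hbh hbb ha _ _ _ _ _ _ _ H.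
by rewrite opprK addrK.
Qed.
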